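(* Let $k$ be a non-negative integer, $a_0,\dots,a_k\in\mathbb{C}$, and suppose $\Lambda=\sum_{i=0}^{k}a_i(Dx)^iD$ is a lowering operator. Let $\{B_n\}_{n\ge0}$ be a monic polynomial sequence with dual sequence $\{u_n\}_{n\ge0}$, let $$B^{[1]}_n(x;\Lambda)=(n+1)^{-1}\Big(\sum_{i=0}^{k}a_i(n+1)^i\Big)^{-1}(\Lambda B_{n+1})(x),\quad n\ge0,$$ and let $\{u^{[1]}_n(\Lambda)\}_{n\ge0}$ be the dual sequence of $\{B^{[1]}_n(\cdot;\Lambda)\}_{n\ge0}$. Then for all $n\ge0$, $${}^t\Lambda\big(u^{[1]}_n(\Lambda)\big)=\rho_nu_{n+1},\qquad \rho_n=(n+1)\sum_{i=0}^{k}a_i(n+1)^i,$$ where ${}^t\Lambda=\sum_{i=0}^{k}a_i(-1)^{i+1}(Dx)^iD$ acting on forms.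
   Context: $\mathcal{P}$ is the space of complex polynomials, $\mathcal{P}'$ its algebraic dual, $\langle u,p\rangle$ the action of a form on a polynomial. $D$ is the derivative, $x$ multiplication by $x$, products are compositions. A lowering operator is a linear map $\mathcal{O}:\mathcal{P}\to\mathcal{P}$ with $\mathcal{O}(1)=0$ and $\deg\mathcal{O}(x^n)=n-1$, $n\ge1$. A monic polynomial sequence (MPS) is a sequence $\{B_n\}_{n\ge0}$ with $B_n$ monic of degree $n$; its dual sequence is the unique $\{u_n\}\subset\mathcal{P}'$ with $\langle u_n,B_m\rangle=\delta_{n,m}$. Transposes: $\langle {}^tT u,p\rangle=\langle u,Tp\rangle$; on forms $\langle Du,p\rangle=-\langle u,p'\rangle$ and $\langle xu,p\rangle=\langle u,xp\rangle$. *)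

(* Defs.v *)
From HB Require Import structures.
From mathcomp Require Import all_boot all_order all_algebra.
From mathcomp Require Import complex.
From mathcomp Require Import reals.
Set Implicit Arguments. Unset Strict Implicit. Unset Printing Implicit Defensive.
Import Order.TTheory GRing.Theory Num.Theory ComplexField.
Local Open Scope ring_scope.

Section Defs.
Variable C : fieldType.

Definition is_form (u : {poly C} -> C) : Prop :=
  forall (c : C) (p q : {poly C}), u (c *: p + q) = c * u p + u q.

Definition Dx (p : {poly C}) : {poly C} := ('X * p)^`().

Definition Lam (k : nat) (a : 'I_k.+1 -> C) (p : {poly C}) : {poly C} :=
  \sum_(i < k.+1) a i *: iter i Dx (p^`()).

Definition lowering (O : {poly C} -> {poly C}) : Prop :=
  [/\ forall c (p q : {poly C}), O (c *: p + q) = c *: O p + O q,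
      O 1 = 0 &
      forall n : nat, (1 <= n)%N -> size (O 'X^n) = n].
(* size = degree + 1, so size (O x^n) = n  <->  deg O(x^n) = n-1 *)

Definition MPS (B : nat -> {poly C}) : Prop :=
  forall n, B n \is monic /\ size (B n) = n.+1.

Definition dual_seq (B : nat -> {poly C}) (u : nat -> {poly C} -> C) : Prop :=
  (forall n, is_form (u n)) /\ (forall n m, u n (B m) = (n == m)%:R).

Definition transp (T : {poly C} -> {poly C}) (u : {poly C} -> C) : {poly C} -> C :=
  fun p => u (T p).

Definition rho (k : nat) (a : 'I_k.+1 -> C) (n : nat) : C :=
  (n.+1)%:R * \sum_(i < k.+1) a i * (n.+1)%:R ^+ i.

Definition B1 (k : nat) (a : 'I_k.+1 -> C) (B : nat -> {poly C}) (n : nat) : {poly C} :=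
  (rho a n)^-1 *: Lam a (B n.+1).

End Defs.

(* Main.v *)
Require Import Defs.
From HB Require Import structures.
From mathcomp Require Import all_boot all_order all_algebra.
From mathcomp Require Import complex.
From mathcomp Require Import reals.
From mathcomp Require Import ring.
Import Order.TTheory GRing.Theory Num.Theory ComplexField.
Local Open Scope ring_scope.

Lemma form0 {F : fieldType} {w : {poly F} -> F} : is_form w -> w 0 = 0.
Proof.
move=> hw; have := hw 1 0 0; rewrite scaler0 addr0 mul1r => h.
by have := congr1 (fun x => x - w 0) h; rewrite subrr addrK.
Qed.

Lemma form_vanish (F : fieldType) (B : nat -> {poly F}) (w : {poly F} -> F) :
  MPS B -> is_form w -> (forall m, w (B m) = 0) -> forall p, w p = 0.
Proof.
move=> hB hw hwB p.
have [n] := ubnP (size p); elim: n p => [|n IH] p hp; first by [].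
have [->|p0] := eqVneq p 0; first exact: form0.
have sp : size p = (size p).-1.+1 by rewrite prednK // size_poly_gt0.
have [mB sB] := hB (size p).-1.
set q := p - lead_coef p *: B (size p).-1.
have -> : p = lead_coef p *: B (size p).-1 + q by rewrite /q addrC subrK.
rewrite hw hwB mulr0 add0r; apply: IH.
have hq : (size q <= (size p).-1)%N.
  apply/leq_sizeP => j hj; rewrite /q coefB coefZ.
  have [ej|gj] := eqVneq j (size p).-1.
    rewrite ej -/(lead_coef p).
    have -> : (B (size p).-1)`_(size p).-1 = 1.
      by rewrite -(eqP mB) /lead_coef sB.
    by rewrite mulr1 subrr.
  have lt : ((size p).-1 < j)%N by rewrite ltn_neqAle eq_sym gj hj.
  have h1 : p`_j = 0 by apply: (leq_sizeP _ _ (leqnn _)); rewrite sp.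
  have h2 : (B (size p).-1)`_j = 0 by apply: (leq_sizeP _ _ (leqnn _)); rewrite sB.
  by rewrite h1 h2 mulr0 subrr.
rewrite ltnS in hp; apply: (leq_trans _ hp); by rewrite sp ltnS.
Qed.

Theorem proposition4 (R : realType) (k : nat) (a : 'I_k.+1 -> R[i])
  (B : nat -> {poly R[i]}) (u u1 : nat -> {poly R[i]} -> R[i]) :
  lowering (Lam a) ->
  MPS B ->
  dual_seq B u ->
  dual_seq (B1 a B) u1 ->
  forall (n : nat) (p : {poly R[i]}),
    transp (Lam a) (u1 n) p = rho a n * u n.+1 p.
Proof.
move=> [hL hL1 _] hB [fu du] [fu1 du1] n p.
have rho0 j : rho a j != 0.
  apply/eqP=> r0; have := du1 j j; rewrite eqxx /B1 r0 invr0 scale0r.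
  by rewrite (form0 (fu1 j) : u1 j 0 = 0) => /eqP; rewrite eq_sym oner_eq0.
have LB j : Lam a (B j.+1) = rho a j *: B1 a B j.
  by rewrite /B1 scalerA mulfV // scale1r.
have B0 : B 0%N = 1.
  have [m s] := hB 0%N; have e := eqP m; rewrite /lead_coef s /= in e.
  by rewrite (size1_polyC (eq_leq s)) e.
apply/eqP; rewrite -subr_eq0; apply/eqP.
pose w q := transp (Lam a) (u1 n) q - rho a n * u n.+1 q.
apply: (@form_vanish _ B w hB).
  move=> c q r; rewrite /w /transp.
  have -> : Lam a (c *: q + r) = c *: Lam a q + Lam a r by apply: hL.
  rewrite fu1 fu; ring.
case=> [|j]; rewrite /w /transp.
  by rewrite du B0 hL1 (form0 (fu1 n) : u1 n 0 = 0) sub0r mulr0 oppr0.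
rewrite LB.
have -> : rho a j *: B1 a B j = rho a j *: B1 a B j + 0 by rewrite addr0.
rewrite fu1 (form0 (fu1 n) : u1 n 0 = 0) addr0 du1 du eqSS.
have [->|] := eqVneq n j; first by rewrite subrr.
by rewrite !mulr0 subrr.
Qed.
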